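(* Fix an integer $m\ge 3$ and a finite complete graph $K$ on at least $m$ vertices. Set \[ \mathcal{O}=\max_{\nu\in\Delta^K}\bigl(2m\cdot\beta(\nu;C_m)+\beta(\nu;P_{m+1})\bigr). \] If $\mu\in\Delta^K$ achieves $\mathcal{O}$, then for all $x\in V(K)$, \[ \frac{m}{2}\bar\mu(x)+\bigl(1-\bar\mu(x)\bigr)^m+\frac{1}{2\mathcal{O}}\cdot\bar\mu(x)\Bigl(\frac{1-\bar\mu(x)}{m-1}\Bigr)^{m-1}\ge 1. \]
   Context: $C_m$ is the cycle on $m$ vertices and $P_{m+1}$ the path on $m+1$ vertices. $\Delta^K$ is the set of probability measures on $E(K)$. For $\mu\in\Delta^K$ and a subgraph $H'\subseteq K$, $\mu(H')=\prod_{e\in E(H')}\mu(e)$; $\beta(\mu;H)=\sum_{H'}\mu(H')$ over all subgraphs $H'$ of $K$ isomorphic to $H$; and $\bar\mu(x)=\sum_{y\in V(K)\setminus\{x\}}\mu(xy)$. *)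

(* Defs.v *)
From HB Require Import structures.
From mathcomp Require Import all_boot all_order all_algebra.
From mathcomp Require Import reals.
Set Implicit Arguments. Unset Strict Implicit. Unset Printing Implicit Defensive.
Import Order.TTheory GRing.Theory Num.Theory.
Local Open Scope ring_scope.

(* The complete graph K on the finite vertex type V: its edges are the
   2-element subsets of V. A weight function assigns a real to each set of
   vertices; only its values on edges matter. *)
Definition is_edge (V : finType) (e : {set V}) : bool := #|e| == 2%N.

Definition in_simplex (R : realType) (V : finType) (mu : {set V} -> R) : Prop :=
  (forall e : {set V}, is_edge e -> 0 <= mu e) /\
  \sum_(e : {set V} | is_edge e) mu e = 1.

(* mu(H') = product of mu over edges of H' (H' given by its edge set). *)
Definition wt (R : realType) (V : finType) (mu : {set V} -> R)
  (F : {set {set V}}) : R := \prod_(e in F) mu e.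

Definition is_cycle_edges (V : finType) (m : nat) (F : {set {set V}}) : bool :=
  [exists c : {ffun 'I_m -> V}, injectiveb c &&
     (F == [set [set c i; c (ordS i)] | i : 'I_m])].

Definition is_path_edges (V : finType) (m : nat) (F : {set {set V}}) : bool :=
  [exists p : {ffun 'I_m.+1 -> V}, injectiveb p &&
     (F == [set [set p (widen_ord (leqnSn m) i); p (lift ord0 i)] | i : 'I_m])].

Definition beta_cycle (R : realType) (V : finType) (m : nat)
  (mu : {set V} -> R) : R :=
  \sum_(F : {set {set V}} | is_cycle_edges m F) wt mu F.

Definition beta_path (R : realType) (V : finType) (m : nat)
  (mu : {set V} -> R) : R :=
  \sum_(F : {set {set V}} | is_path_edges m F) wt mu F.

Definition objective (R : realType) (V : finType) (m : nat)
  (nu : {set V} -> R) : R :=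
  (2 * m)%:R * beta_cycle m nu + beta_path m nu.

Definition mubar (R : realType) (V : finType) (mu : {set V} -> R) (x : V) : R :=
  \sum_(y : V | y != x) mu [set x; y].

(* Main.v *)
Require Import Defs.
From HB Require Import structures.
From mathcomp Require Import all_boot all_order all_algebra.
From mathcomp Require Import reals.
From mathcomp Require Import ring lra zify.
Import Order.TTheory GRing.Theory Num.Theory.
Local Open Scope ring_scope.



Section Alg.
Variable R : realType.

Lemma bernoulli (x : R) n : -1 <= x -> 1 + n%:R * x <= (1 + x) ^+ n.
Proof.
move=> hx; elim: n => [|n IH]; first by rewrite mul0r addr0 expr0.
rewrite exprS.
have h1 : 0 <= 1 + x by lra.
apply: le_trans (_ : (1 + x) * (1 + n%:R * x) <= _); last by rewrite ler_wpM2l.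
have : 0 <= n%:R * (x * x) :> R by rewrite mulr_ge0 // ?ler0n // -expr2 sqr_ge0.
rewrite -natr1; nra.
Qed.

Lemma lim_le0 (t0 M L : R) : 0 < t0 -> 0 <= M ->
  (forall t, 0 < t -> t <= t0 -> L <= t * M) -> L <= 0.
Proof.
move=> ht0 hM H; rewrite leNgt; apply/negP => hL.
pose t := Order.min t0 (L / (M + 1)).
have hM1 : 0 < M + 1 by lra.
have ht : 0 < t by rewrite lt_min ht0 divr_gt0.
have ht1 : t <= L / (M + 1) by rewrite ge_min lexx orbT.
have ht2 : t <= t0 by rewrite ge_min lexx.
have := H t ht ht2.
have : t * (M + 1) <= L by rewrite -ler_pdivlMr.
nra.
Qed.

Lemma agm_step (a c : R) k : 0 <= a -> 0 <= c ->
  a * (c / k%:R) ^+ k <= ((a + c) / k.+1%:R) ^+ k.+1.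
Proof.
move=> ha hc; case: k => [|k].
  by rewrite expr0 mulr1 expr1 divr1; lra.
pose E := fun i : 'I_k.+2 => if i == ord0 then a else c / k.+1%:R.
have hE : {in predT, forall i, 0 <= E i}.
  by move=> i _; rewrite /E; case: eqP => _ //; rewrite divr_ge0 ?ler0n.
have hs : \sum_(i in predT) E i = a + c.
  rewrite (eq_bigl (fun _ => true)) // big_ord_recl /E /=.
  by rewrite sumr_const card_ord -[c / _ *+ _]mulr_natr divfK // pnatr_eq0.

have := (leif_AGM hE).1; rewrite /= hs.
have -> : #|predT : {pred 'I_k.+2}| = k.+2 by rewrite cardT size_enum_ord.
rewrite big_ord_recl /E /=.
by rewrite prodr_const card_ord.

Qed.
End Alg.



Section Comb.
Variable V : finType.

Definition dx (x : V) (F : {set {set V}}) := #|[set e in F | x \in e]|.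

Lemma ordS_neq m (j : 'I_m) : (2 <= m)%N -> ordS j != j.
Proof.
move=> hm; apply/eqP => /(congr1 val) /=; have := ltn_ord j.
case: (ltngtP j.+1 m) => [h _|//|h _].
- by rewrite modn_small //; lia.
- by rewrite h modnn; lia.
Qed.

Lemma ordSS_neq m (j : 'I_m) : (3 <= m)%N -> ordS (ordS j) != j.
Proof.
move=> hm; apply/eqP => /(congr1 val) /=; have := ltn_ord j => hj.
case: (ltngtP j.+1 m) => [h|h|h]; last first.
- by rewrite h modnn modn_small; lia.
- lia.
rewrite (modn_small h); case: (ltngtP j.+2 m) => [h2|h2|h2].
- by rewrite modn_small //; lia.
- lia.
- by rewrite h2 modnn; lia.
Qed.

Arguments ordS_neq {m}.
Arguments ordSS_neq {m}.

Lemma set2_eq_cases (a b c d : V) : [set a; b] = [set c; d] ->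
  (a == c) || (a == d).
Proof. by move=> h; have := set21 a b; rewrite h in_set2. Qed.
Arguments set2_eq_cases {a b c d}.

Section Cyc.
Variable m : nat.
Hypothesis hm : (3 <= m)%N.
Variable c : {ffun 'I_m -> V}.
Hypothesis ci : injective c.

Definition cedge (i : 'I_m) : {set V} := [set c i; c (ordS i)].

Lemma cedge_edge i : is_edge (cedge i).
Proof.
rewrite /is_edge /cedge cards2 (inj_eq ci).
by have := ordS_neq i (ltnW hm); rewrite eq_sym => ->.
Qed.

Lemma cedge_inj : injective cedge.
Proof.
move=> i j h; have := set2_eq_cases h; rewrite !(inj_eq ci).
case/orP=> /eqP // e; subst i.
have := set22 (c (ordS (ordS j))) (c (ordS (ordS j))).
have := set22 (c (ordS j)) (c (ordS (ordS j))).
rewrite /cedge in h; rewrite h in_set2 !(inj_eq ci) => /orP[/eqP e|].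
  by move: (ordSS_neq j hm); rewrite e eqxx.
move=> /eqP e; move: (ordS_neq (ordS j) (ltnW hm)); by rewrite e eqxx.
Qed.

Lemma cyc_card : #|[set cedge i | i : 'I_m]| = m.
Proof. by rewrite card_imset ?card_ord //; exact: cedge_inj. Qed.

Lemma cyc_dx x : (0 < dx x [set cedge i | i : 'I_m])%N ->
  (2 <= dx x [set cedge i | i : 'I_m])%N.
Proof.
rewrite /dx card_gt0 => /set0Pn [e]; rewrite inE => /andP [/imsetP [i _ ->]].
rewrite /cedge in_set2 => hx.
have [j hj] : exists j, x = c j.
  by case/orP: hx => /eqP ->; [exists i | exists (ordS i)].
have hne : cedge j != cedge (ord_pred j).
  rewrite (inj_eq cedge_inj); apply/eqP => e1.
  by move: (ordS_neq j (ltnW hm)); rewrite {1}e1 ord_predK eqxx.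
have h2 : #|[set cedge j; cedge (ord_pred j)]| = 2%N by rewrite cards2 hne.
rewrite -h2.
apply: subset_leq_card; apply/subsetP => e2; rewrite in_set2 => /orP [] /eqP ->;
  rewrite inE imset_f // /cedge ?ord_predK hj in_set2 eqxx ?orbT //.
Qed.
End Cyc.
End Comb.
Arguments set2_eq_cases {V a b c d}.
Arguments dx {V}.
Arguments cedge {V m} c i.
Arguments cedge_edge {V m} hm {c} ci i.
Arguments cedge_inj {V m} hm {c} ci.
Arguments cyc_card {V m} hm {c} ci.
Arguments cyc_dx {V m} hm {c} ci x.



Section Pth.
Variable V : finType.
Variable m : nat.

Definition pedge (p : {ffun 'I_m.+1 -> V}) (i : 'I_m) : {set V} :=
  [set p (widen_ord (leqnSn m) i); p (lift ord0 i)].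

Variable p : {ffun 'I_m.+1 -> V}.
Hypothesis pi : injective p.

Lemma pedge_edge i : is_edge (pedge p i).
Proof.
rewrite /is_edge /pedge cards2 (inj_eq pi).
suff -> : (widen_ord (leqnSn m) i != lift ord0 i) by [].
by apply/eqP => /(congr1 val) /=; rewrite /bump /=; lia.
Qed.

Lemma pedge_inj : injective (pedge p).
Proof.
move=> i j h; have := set2_eq_cases h; rewrite !(inj_eq pi).
have := set2_eq_cases (esym h); rewrite !(inj_eq pi).
have hh : [set p (lift ord0 i); p (widen_ord (leqnSn m) i)] =
          [set p (lift ord0 j); p (widen_ord (leqnSn m) j)].
  by rewrite setUC [in RHS]setUC.
have := set2_eq_cases hh; rewrite !(inj_eq pi).
move=> /orP [] /eqP /(congr1 val) /= h1 /orP [] /eqP /(congr1 val) /= h2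
        /orP [] /eqP /(congr1 val) /= h3; apply/val_inj => /=;
  rewrite /bump /= in h1 h2 h3; lia.
Qed.

Lemma path_card : #|[set pedge p i | i : 'I_m]| = m.
Proof. by rewrite card_imset ?card_ord //; exact: pedge_inj. Qed.

Lemma path_vertex x e : e \in [set pedge p i | i : 'I_m] -> x \in e ->
  exists k, x = p k.
Proof.
move=> /imsetP [i _ ->]; rewrite /pedge in_set2 => /orP [] /eqP ->; by eexists.
Qed.

Lemma path_interior (k : 'I_m.+1) : (0 < k)%N -> (k < m)%N ->
  (2 <= dx (p k) [set pedge p i | i : 'I_m])%N.
Proof.
move=> h0 h1.
pose i1 : 'I_m := Ordinal (leq_ltn_trans (leq_pred k) h1).
pose i2 : 'I_m := Ordinal h1.
have hne : pedge p i1 != pedge p i2.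
  by rewrite (inj_eq pedge_inj); apply/eqP => /(congr1 val) /=; lia.
have h2 : #|[set pedge p i1; pedge p i2]| = 2%N by rewrite cards2 hne.
rewrite /dx -h2; apply: subset_leq_card; apply/subsetP => e2.
rewrite in_set2 => /orP [] /eqP ->; rewrite inE imset_f // /pedge in_set2.
  have -> : lift ord0 i1 = k by apply/val_inj => /=; rewrite /bump /=; lia.
  by rewrite eqxx orbT.
have -> : widen_ord (leqnSn m) i2 = k by apply/val_inj.
by rewrite eqxx.
Qed.

Definition prev : {ffun 'I_m.+1 -> V} := [ffun i => p (rev_ord i)].

Lemma prev_inj : injective prev.
Proof. by move=> i j; rewrite !ffunE => /pi /rev_ord_inj. Qed.

Lemma prev_edges : [set pedge prev i | i : 'I_m] = [set pedge p i | i : 'I_m].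
Proof.
have key : forall i, pedge prev i = pedge p (rev_ord i).
  move=> i; rewrite /pedge !ffunE setUC; congr [set p _; p _]; apply/val_inj => /=;
  rewrite /bump /=; have := ltn_ord i; lia.
apply/setP => e; apply/imsetP/imsetP => [] [i _ ->].
  by exists (rev_ord i); rewrite ?key.
by exists (rev_ord i) => //; rewrite key rev_ordK.
Qed.
End Pth.
Arguments pedge {V m}.
Arguments prev {V m}.
Arguments path_interior {V m p} pi {k}.
Arguments prev_inj {V m p}.
Arguments pedge_edge {V m p}.
Arguments pedge_inj {V m p}.
Arguments path_card {V m p}.
Arguments prev_edges {V m}.

Lemma path_endpoint (V : finType) m (F : {set {set V}}) x :
  is_path_edges m F -> dx x F = 1%N ->
  exists q : {ffun 'I_m.+1 -> V}, [/\ injective q, q ord0 = x &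
     F = [set pedge q i | i : 'I_m]].
Proof.
move=> /existsP [p /andP [/injectiveP pi /eqP hF]] hd.
have : (0 < dx x F)%N by rewrite hd.
rewrite /dx card_gt0 => /set0Pn [e]; rewrite inE => /andP [he hxe].
have [k hk] : exists k, x = p k.
  by apply: (@path_vertex _ _ p x e) => //; rewrite -hF.
have hF' : F = [set pedge p i | i : 'I_m] by rewrite hF.
case: (posnP k) => [k0|kpos].
  exists p; split => //; rewrite hk; congr (p _); exact/val_inj.
case: (ltnP k m) => [klt|kge].
  have := path_interior pi kpos klt; rewrite -hk -hF' hd //.
exists (prev p); split.
- exact: (prev_inj pi).
- rewrite /prev ffunE hk; congr (p _); apply/val_inj => /=.
  have := ltn_ord k; lia.
- by rewrite prev_edges.
Qed.
Arguments path_endpoint {V m F x}.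



Section T.
Variable R : realType.
Variable V : finType.
Variable mu : {set V} -> R.
Hypothesis hmu : forall e, is_edge e -> 0 <= mu e.

Lemma sum_le_sub (I : finType) (P Q : pred I) (f : I -> R) :
  (forall i, P i -> Q i) -> (forall i, Q i -> 0 <= f i) ->
  \sum_(i | P i) f i <= \sum_(i | Q i) f i.
Proof.
move=> hPQ hf; rewrite [X in _ <= X](bigID P) /=.
have -> : \sum_(i | Q i && P i) f i = \sum_(i | P i) f i.
  by apply: eq_bigl => i; case hp: (P i); rewrite ?andbT ?andbF ?hPQ.
rewrite lerDl; apply: sumr_ge0 => i /andP [hq _]; exact: hf.
Qed.

Definition Tw k (v : V) (Av : {set V}) : R :=
  \sum_(p : {ffun 'I_k.+1 -> V} | [&& p ord0 == v, injectiveb p & [forall i, p i \notin Av]])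
    \prod_(i < k) mu (pedge p i).

Definition Sw (Av : {set V}) : R :=
  \sum_(e : {set V} | is_edge e && [forall u in e, u \notin Av]) mu e.

Lemma prod_pedge_ge0 k (p : {ffun 'I_k.+1 -> V}) : injective p ->
  0 <= \prod_(i < k) mu (pedge p i).
Proof. move=> pi; apply: prodr_ge0 => i _; apply: hmu; exact: pedge_edge. Qed.

Lemma Tw_ge0 k v Av : 0 <= Tw k v Av.
Proof.
apply: sumr_ge0 => p /and3P [_ /injectiveP pi _]; exact: prod_pedge_ge0.
Qed.

Lemma Tw0 v Av : Tw 0 v Av <= 1.
Proof.
rewrite /Tw.
under eq_bigr do rewrite big_ord0.
rewrite sumr_const.
have : (#|[pred p : {ffun 'I_1 -> V} | [&& p ord0 == v, injectiveb p & [forall i, p i \notin Av]]]| <= 1)%N.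
  rewrite -[X in (_ <= X)%N](card1 ([ffun _ => v] : {ffun 'I_1 -> V})); apply: subset_leq_card; apply/subsetP => p.
  rewrite !inE => /and3P [/eqP h0 _ _]; apply/eqP/ffunP => i.
  by rewrite ffunE (ord1 i) h0.
by rewrite -(ler_nat R).
Qed.

Lemma Tw_step k (v : V) (Av : {set V}) : v \notin Av ->
  Tw k.+1 v Av <= \sum_(w | (w \notin Av) && (w != v)) mu [set v; w] * Tw k w (v |: Av).
Proof.
move=> hv.
pose h (q : {ffun 'I_k.+1 -> V}) : {ffun 'I_k.+2 -> V} :=
  [ffun i => if unlift ord0 i is Some j then q j else v].
pose h' (p : {ffun 'I_k.+2 -> V}) : {ffun 'I_k.+1 -> V} := [ffun j => p (lift ord0 j)].
have hq0 q : h q ord0 = v by rewrite ffunE unlift_none.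
have hqS q j : h q (lift ord0 j) = q j by rewrite ffunE liftK.
have hP q : [&& h q ord0 == v, injectiveb (h q) & [forall i, h q i \notin Av]] ->
    [&& q ord0 \notin Av, q ord0 != v, injectiveb q & [forall i, q i \notin v |: Av]].
  move=> /and3P [_ /injectiveP hi /forallP ha].
  have hne j : q j != v.
    by rewrite -(hq0 q) -hqS (inj_eq hi) eq_sym neq_lift.
  have hna j : q j \notin Av by rewrite -hqS ha.
  rewrite hna hne /=; apply/andP; split.
    by apply/injectiveP => i j; rewrite -!hqS => /hi /lift_inj.
  by apply/forallP => j; rewrite in_setU1 negb_or hne hna.
rewrite /Tw (reindex_onto h h').
  rewrite (partition_big (fun q : {ffun 'I_k.+1 -> V} => q ord0) (fun w => (w \notin Av) && (w != v))); last first.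
    by move=> q /andP [/hP /and4P [-> -> _ _] _].
  apply: ler_sum => w /andP [hwA hwv]; rewrite mulr_sumr.
  rewrite [X in X <= _](eq_bigr (fun q => mu [set v; w] * \prod_(i < k) mu (pedge q i))).
    apply: sum_le_sub.
      move=> q /andP [/andP [/hP /and4P [_ _ h1 h2] _] ->]; by rewrite h1 h2.
    move=> q /and3P [_ /injectiveP qi _]; apply: mulr_ge0; last exact: prod_pedge_ge0.
    by apply: hmu; rewrite /is_edge cards2 (eq_sym v w) hwv.
  move=> q /andP [_ /eqP hw]; rewrite big_ord_recl; congr (mu _ * _).
    rewrite /pedge -hw -(hqS q ord0) -(hq0 q).
    by congr [set h q _; h q _]; exact/val_inj.
  apply: eq_bigr => i _; rewrite /pedge -!hqS.
  by congr (mu [set h q _; h q _]); exact/val_inj.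
move=> p /and3P [/eqP h0 _ _]; apply/ffunP => i; rewrite ffunE.
by case: unliftP => [j ->|->]; rewrite ?ffunE // h0.
Qed.

Lemma star_sum (v : V) (P : pred V) :
  \sum_(w | P w && (w != v)) mu [set v; w] =
  \sum_(e in [set [set v; w] | w in [pred w | P w && (w != v)]]) mu e.
Proof.
rewrite big_imset /=; first by apply: eq_bigl.
move=> w1 w2; rewrite !inE => /andP [_ h1] /andP [_ h2] e.
have := set22 v w1; rewrite e in_set2 => /orP [/eqP h|/eqP //].
by move: h1; rewrite h eqxx.
Qed.

Lemma star_mem (v : V) (e : {set V}) :
  (e \in [set [set v; w] | w in [pred w | predT w && (w != v)]]) = is_edge e && (v \in e).
Proof.
apply/imsetP/andP => [[w hw ->]|[/cards2P [a [b [hab he]]] hv]].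
  by move: hw; rewrite !inE /= /is_edge cards2 eqxx (eq_sym v w) => ->.
move: hv; rewrite he in_set2 => /orP [] /eqP hv; subst.
  by exists b; rewrite // inE /= eq_sym.
by exists a; rewrite ?inE //= setUC.
Qed.

Lemma Sw_split (v : V) (Av : {set V}) : v \notin Av ->
  \sum_(w | (w \notin Av) && (w != v)) mu [set v; w] + Sw (v |: Av) <= Sw Av.
Proof.
move=> hv; rewrite /Sw [X in _ <= X](bigID (fun e : {set V} => v \in e)) /=; apply: lerD.
  rewrite (star_sum v (fun w => w \notin Av)); apply: sum_le_sub.
    move=> e /imsetP [w]; rewrite inE => /andP [hwA hwv] ->.
    rewrite /is_edge cards2 set21 (eq_sym v w) hwv andbT /=.
    apply/forallP => u; apply/implyP; rewrite in_set2 => /orP [] /eqP -> //.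
  by move=> e /andP [/andP [he _] _]; exact: hmu.
apply: sum_le_sub.
  move=> e /andP [he /forallP ha]; rewrite he /=; apply/andP; split.
    by apply/forallP => u; apply/implyP => hu; move: (ha u); rewrite hu in_setU1 negb_or => /andP [].
  by apply/negP => hve; move: (ha v); rewrite hve in_setU1 eqxx.
by move=> e /andP [/andP [he _] _]; exact: hmu.
Qed.

Lemma Sw_ge0 Av : 0 <= Sw Av.
Proof. by apply: sumr_ge0 => e /andP [he _]; exact: hmu. Qed.

Lemma Tw_bound k : forall (v : V) (Av : {set V}), v \notin Av ->
  Tw k v Av <= (Sw Av / k%:R) ^+ k.
Proof.
elim: k => [|k IH] v Av hv; first by rewrite expr0 Tw0.
apply: le_trans (@Tw_step k v Av hv) _.
set c := (Sw (v |: Av) / k%:R) ^+ k.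
apply: le_trans (_ : \sum_(w | (w \notin Av) && (w != v)) mu [set v; w] * c <= _).
  apply: ler_sum => w /andP [hwA hwv]; apply: ler_wpM2l.
    by apply: hmu; rewrite /is_edge cards2 (eq_sym v w) hwv.
  by apply: IH; rewrite in_setU1 negb_or hwv.
rewrite -mulr_suml /c.
have ha : 0 <= \sum_(w | (w \notin Av) && (w != v)) mu [set v; w].
  apply: sumr_ge0 => w /andP [_ hwv].
  by apply: hmu; rewrite /is_edge cards2 (eq_sym v w) hwv.
apply: le_trans (@agm_step R _ _ k ha (Sw_ge0 _)) _.
apply: lerXn2r; rewrite ?inE.
- by apply: divr_ge0; [apply: addr_ge0 => //; exact: Sw_ge0 | exact: ler0n].
- by apply: divr_ge0; [exact: Sw_ge0 | exact: ler0n].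
- by rewrite ler_pM2r ?invr_gt0 ?ltr0n //; exact: Sw_split.
Qed.
End T.
Arguments Tw {R V}.
Arguments Sw {R V}.
Arguments prod_pedge_ge0 {R V mu} hmu {k p}.
Arguments sum_le_sub {R I P Q f}.
Arguments Tw_bound {R V mu} hmu k {v Av}.
Arguments Tw_step {R V mu} hmu k {v Av}.
Arguments Sw_split {R V mu} hmu {v Av}.
Arguments Sw_ge0 {R V mu} hmu Av.
Arguments star_sum {R V} mu v P.
Arguments star_mem {V} v e.



Section E.
Variable R : realType.
Variable V : finType.
Variable mu : {set V} -> R.
Hypothesis hmu : forall e, is_edge e -> 0 <= mu e.

Lemma wt_pedge m (p : {ffun 'I_m.+1 -> V}) : injective p ->
  wt mu [set pedge p i | i : 'I_m] = \prod_(i < m) mu (pedge p i).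
Proof.
move=> pi; rewrite /wt big_imset /=; first by apply: eq_bigl.
by move=> i j _ _; exact: (pedge_inj pi).
Qed.

Lemma Epath_le m (x : V) :
  \sum_(F : {set {set V}} | is_path_edges m F && (dx x F == 1%N)) wt mu F
  <= Tw mu m x set0.
Proof.
have -> : Tw mu m x set0 = \sum_(F : {set {set V}})
   \sum_(p : {ffun 'I_m.+1 -> V} | [&& p ord0 == x, injectiveb p & [forall i, p i \notin set0]] &&
     ([set pedge p i | i : 'I_m] == F)) \prod_(i < m) mu (pedge p i).
  by rewrite /Tw (partition_big (fun p : {ffun 'I_m.+1 -> V} => [set pedge p i | i : 'I_m]) predT).
apply: (@le_trans _ _ (\sum_(F | is_path_edges m F && (dx x F == 1%N))
   \sum_(p : {ffun 'I_m.+1 -> V} | [&& p ord0 == x, injectiveb p & [forall i, p i \notin set0]] &&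
     ([set pedge p i | i : 'I_m] == F)) \prod_(i < m) mu (pedge p i))).
  apply: ler_sum => F /andP [hF /eqP hd].
  have [q [qi q0 hq]] := path_endpoint hF hd.
  have hPq : [&& q ord0 == x, injectiveb q & [forall i, q i \notin set0]] &&
     ([set pedge q i | i : 'I_m] == F).
    rewrite q0 eqxx -hq eqxx andbT /=; apply/andP; split; first exact/injectiveP.
    by apply/forallP => i; rewrite in_set0.
  rewrite (bigD1 q hPq) /= hq wt_pedge // lerDl.
  apply: sumr_ge0 => p /andP [/andP [/and3P [_ /injectiveP pi _] _] _].
  exact: (prod_pedge_ge0 hmu).
apply: sum_le_sub => // F _.
apply: sumr_ge0 => p /andP [/and3P [_ /injectiveP pi _] _].
exact: (prod_pedge_ge0 hmu).
Qed.
End E.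



Section Main.
Variable R : realType.
Variable V : finType.
Variable m : nat.
Hypothesis hm : (3 <= m)%N.

Definition good (F : {set {set V}}) := (#|F| == m) && [forall e in F, is_edge e].

Lemma cyc_good F : is_cycle_edges m F -> good F.
Proof.
move=> /existsP [c /andP [/injectiveP ci /eqP ->]].
rewrite /good (cyc_card hm ci) eqxx /=; apply/forallP => e; apply/implyP.
by move=> /imsetP [i _ ->]; exact: (cedge_edge hm ci).
Qed.

Lemma path_good F : is_path_edges m F -> good F.
Proof.
move=> /existsP [p /andP [/injectiveP pi /eqP ->]].
rewrite /good -/(pedge p) (path_card pi) eqxx /=; apply/forallP => e; apply/implyP.
by move=> /imsetP [i _ ->]; exact: (pedge_edge pi).
Qed.

Definition kap (F : {set {set V}}) : R :=
  (2 * m)%:R * (is_cycle_edges m F)%:R + (is_path_edges m F)%:R.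

Lemma kap_ge0 F : 0 <= kap F.
Proof. by rewrite /kap addr_ge0 // mulr_ge0. Qed.

Lemma kap_good F : kap F != 0 -> good F.
Proof.
rewrite /kap; case hc: (is_cycle_edges m F); first by move=> _; exact: cyc_good.
case hp: (is_path_edges m F); first by move=> _; exact: path_good.
by rewrite mulr0 addr0 eqxx.
Qed.

Lemma obj_kap (nu : {set V} -> R) :
  objective m nu = \sum_(F : {set {set V}}) kap F * wt nu F.
Proof.
rewrite /objective /beta_cycle /beta_path !(big_mkcond (is_cycle_edges m)) 
  !(big_mkcond (is_path_edges m)) mulr_sumr -big_split /=.
apply: eq_bigr => F _; rewrite /kap.
by case: (is_cycle_edges m F); case: (is_path_edges m F); rewrite /= ?mulr1 ?mulr0 ?mul1r ?mul0r ?addr0 ?add0r //; ring.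
Qed.

Lemma wt_ge0 (nu : {set V} -> R) F : (forall e, is_edge e -> 0 <= nu e) -> good F ->
  0 <= wt nu F.
Proof.
move=> hnu /andP [_ /forallP hF]; apply: prodr_ge0 => e he.
by apply: hnu; move: (hF e); rewrite he.
Qed.

Variable mu : {set V} -> R.
Variable x : V.

Definition nu (a s : R) (e : {set V}) := (if x \in e then a else s) * mu e.

Lemma wt_nu a s F : wt (nu a s) F = a ^+ dx x F * s ^+ (#|F| - dx x F) * wt mu F.
Proof.
rewrite /wt /nu big_split /= (bigID (fun e : {set V} => x \in e)) /=.
have h1 : \prod_(e in F | x \in e) (if x \in e then a else s) = a ^+ dx x F.
  rewrite (eq_bigr (fun _ => a)); last by move=> e /andP [_ ->].
  by rewrite -prodr_const /dx; apply: eq_bigl => e; rewrite inE.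
have h2 : \prod_(e in F | x \notin e) (if x \in e then a else s) = s ^+ (#|F| - dx x F).
  rewrite (eq_bigr (fun _ => s)); last by move=> e /andP [_ /negbTE ->].
  have hc : (#|F| - dx x F)%N = #|[set e in F | x \notin e]|.
    rewrite /dx -(cardsID [set e : {set V} | x \in e] F).
    have -> : F :&: [set e : {set V} | x \in e] = [set e in F | x \in e].
      by apply/setP => e; rewrite !inE.
    by rewrite addKn; apply: eq_card => e; rewrite !inE andbC.
  by rewrite hc -prodr_const; apply: eq_bigl => e; rewrite !inE.
by rewrite h1 h2.
Qed.

Hypothesis hsimp : in_simplex mu.
Let hmu : forall e, is_edge e -> 0 <= mu e := hsimp.1.

Lemma sum_edge_x : \sum_(e | is_edge e && (x \in e)) mu e = mubar mu x.
Proof.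
rewrite /mubar (eq_bigl (fun y => predT y && (y != x))) // (star_sum mu x predT).
by apply: eq_bigl => e; rewrite star_mem.
Qed.

Lemma sum_edge_nx : \sum_(e | is_edge e && (x \notin e)) mu e = 1 - mubar mu x.
Proof.
by rewrite -[in RHS]hsimp.2 [in RHS](bigID (fun e : {set V} => x \in e)) /= sum_edge_x addrC addrK.
Qed.

Lemma b_ge0 : 0 <= mubar mu x.
Proof. by rewrite -sum_edge_x; apply: sumr_ge0 => e /andP [he _]; exact: hmu. Qed.

Lemma b_le1 : mubar mu x <= 1.
Proof.
rewrite -subr_ge0 -sum_edge_nx; apply: sumr_ge0 => e /andP [he _]; exact: hmu.
Qed.

Lemma nu_simplex a s : 0 <= a -> 0 <= s -> a * mubar mu x + s * (1 - mubar mu x) = 1 ->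
  in_simplex (nu a s).
Proof.
move=> ha hs hab; split.
  move=> e he; rewrite /nu; apply: mulr_ge0; last exact: hmu.
  by case: (x \in e).
rewrite /nu (bigID (fun e : {set V} => x \in e)) /=.
rewrite (eq_bigr (fun e => a * mu e)); last by move=> e /andP [_ ->].
rewrite [X in _ + X = _](eq_bigr (fun e => s * mu e)); last by move=> e /andP [_ /negbTE ->].
by rewrite -!mulr_sumr sum_edge_x sum_edge_nx.
Qed.

Lemma dx_le F : (dx x F <= #|F|)%N.
Proof. by apply: subset_leq_card; apply/subsetP => e; rewrite inE => /andP []. Qed.

Hypothesis hopt : forall nu : {set V} -> R, in_simplex nu -> objective m nu <= objective m mu.

Lemma step1 : mubar mu x < 1 ->
  \sum_F kap F * wt mu F * (dx x F == 0%N)%:R <= (1 - mubar mu x) ^+ m * objective m mu.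
Proof.
move=> hb1; set b := mubar mu x; set s := (1 - b)^-1.
have hs0 : 0 < 1 - b by rewrite subr_gt0.
have hs : 0 <= s by rewrite invr_ge0 ltW.
have hsim : 0 * b + s * (1 - b) = 1 by rewrite mul0r add0r mulVf ?gt_eqF.
have := hopt _ (@nu_simplex 0 s (lexx 0) hs hsim).

rewrite obj_kap.
have -> : \sum_F kap F * wt (nu 0 s) F = s ^+ m * \sum_F kap F * wt mu F * (dx x F == 0%N)%:R.
  rewrite mulr_sumr; apply: eq_bigr => F _; rewrite wt_nu expr0n.
  have [k0|kn0] := eqVneq (kap F) 0; first by rewrite k0 !mul0r mulr0.
  have /andP [/eqP hF _] := kap_good F kn0.
  by case: eqP => [->|_]; rewrite /= ?mul0r ?mulr0 ?mul1r ?mulr1 ?subn0 ?hF //; ring.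
move=> h; set A := \sum_F _.
have -> : A = (1 - b) ^+ m * (s ^+ m * A).
  by rewrite mulrA -exprMn /s mulfV ?gt_eqF // expr1n mul1r.
by apply: ler_wpM2l => //; rewrite exprn_ge0 // ltW.
Qed.

Lemma P_ge0 F : 0 <= kap F * wt mu F.
Proof.
have [k0|kn0] := eqVneq (kap F) 0; first by rewrite k0 mul0r.
by apply: mulr_ge0; [exact: kap_ge0 | apply: wt_ge0 => //; exact: kap_good].
Qed.

Lemma poly_ineq (t b : R) (d k : nat) : 0 < t -> t <= 1 -> 0 <= b -> b <= 1 ->
  1 + t * (d%:R - (d + k)%:R * b) - t ^+ 2 * (d%:R * k%:R * (b * (1 - b)))
  <= (1 + t * (1 - b)) ^+ d * (1 - t * b) ^+ k.
Proof.
move=> ht0 ht1 hb0 hb1.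
have hA := @bernoulli R (t * (1 - b)) d ltac:(nra).
have hS := @bernoulli R (- (t * b)) k ltac:(nra).
set X := (1 + t * (1 - b)) ^+ d in hA *.
set Y := (1 + - (t * b)) ^+ k in hS *.
have hY : 0 <= Y by rewrite /Y exprn_ge0 //; nra.
have ha' : 0 <= 1 + d%:R * (t * (1 - b)).
  by apply: addr_ge0 => //; apply: mulr_ge0; [exact: ler0n | apply: mulr_ge0; [exact: ltW | rewrite subr_ge0]].
have h1 : (1 + d%:R * (t * (1 - b))) * Y <= X * Y by apply: ler_wpM2r.
have h2 : (1 + d%:R * (t * (1 - b))) * (1 + k%:R * - (t * b)) <=
          (1 + d%:R * (t * (1 - b))) * Y by apply: ler_wpM2l.
have e : (1 + d%:R * (t * (1 - b))) * (1 + k%:R * - (t * b)) =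
   1 + t * (d%:R - (d + k)%:R * b) - t ^+ 2 * (d%:R * k%:R * (b * (1 - b))).
  by rewrite natrD; ring.
lra.
Qed.

Lemma step2 : \sum_F kap F * wt mu F * (dx x F)%:R <= m%:R * mubar mu x * objective m mu.
Proof.
set b := mubar mu x.
have hb0 : 0 <= b := b_ge0.
have hb1 : b <= 1 := b_le1.
pose Y F := kap F * wt mu F * ((dx x F)%:R - m%:R * b).
pose Z F := kap F * wt mu F * ((dx x F)%:R * ((m - dx x F)%N)%:R * (b * (1 - b))).
have hZ : 0 <= \sum_F Z F.
  apply: sumr_ge0 => F _; apply: mulr_ge0; first exact: P_ge0.
  by apply: mulr_ge0; [apply: mulr_ge0; exact: ler0n | apply: mulr_ge0; [exact: hb0 | rewrite subr_ge0]].
have key : forall t, 0 < t -> t <= 1 -> \sum_F Y F <= t * \sum_F Z F.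
  move=> t ht0 ht1.
  have ha : 0 <= 1 + t * (1 - b).
    by apply: addr_ge0 => //; apply: mulr_ge0; [exact: ltW | rewrite subr_ge0].
  have hs : 0 <= 1 - t * b.
    by rewrite subr_ge0; apply: le_trans (ler_wpM2r hb0 ht1) _; rewrite mul1r.
  have hab : (1 + t * (1 - b)) * b + (1 - t * b) * (1 - b) = 1 by ring.
  have := hopt _ (@nu_simplex _ _ ha hs hab); rewrite obj_kap.
  have hF : forall F, kap F * wt mu F + t * Y F - t ^+ 2 * Z F <=
      kap F * wt (nu (1 + t * (1 - b)) (1 - t * b)) F.
    move=> F; rewrite wt_nu /Y /Z.
    have [k0|kn0] := eqVneq (kap F) 0; first by rewrite k0 !mul0r !mulr0 addr0 subr0.
    have /andP [/eqP hF _] := kap_good F kn0.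
    have hd := dx_le F; rewrite hF in hd.
    have := @poly_ineq t b (dx x F) (m - dx x F) ht0 ht1 hb0 hb1.
    rewrite subnKC // hF => hp.
    have hP := P_ge0 F.
    have := ler_wpM2l hP hp.
    move=> h; apply: le_trans (le_trans _ h) _; rewrite le_eqVlt; apply/orP; left; apply/eqP.
      move: (kap F) (wt mu F) ((dx x F)%:R) (((m - dx x F)%N)%:R : R) => K W dd kk; ring.
    move: (kap F) (wt mu F) ((1 + t * (1 - b)) ^+ dx x F) ((1 - t * b) ^+ (m - dx x F)) => K W X1 X2.
    ring.


  move=> hO.
  have : \sum_F (kap F * wt mu F + t * Y F - t ^+ 2 * Z F) <=
      \sum_F kap F * wt (nu (1 + t * (1 - b)) (1 - t * b)) F.
    by apply: ler_sum => F _; exact: hF.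
  rewrite sumrB big_split /= -!mulr_sumr -obj_kap => h.
  have h' : t * \sum_F Y F <= t * (t * \sum_F Z F).
    rewrite mulrA -expr2; move: h hO.
    set o1 := objective m mu; set o2 := \sum_F _; set y := t * _; set z := t ^+ 2 * _.
    move=> h hO; lra.
  by rewrite ler_pM2l in h'.
have := @lim_le0 R _ _ _ ltr01 hZ key.
rewrite /Y.
under eq_bigr do rewrite mulrBr.
rewrite sumrB subr_le0 => h; apply: le_trans h _.
rewrite obj_kap; move: (m%:R * mubar mu x) => c.
rewrite mulr_sumr le_eqVlt; apply/orP; left; apply/eqP.
by apply: eq_bigr => F _; rewrite mulrC.
Qed.

Lemma step3 : objective m mu <=
  \sum_F kap F * wt mu F * (dx x F == 0%N)%:R +
  (\sum_F kap F * wt mu F * (dx x F)%:R) / 2 +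
  (\sum_F kap F * wt mu F * (dx x F == 1%N)%:R) / 2.
Proof.
rewrite obj_kap !mulr_suml -!big_split /=; apply: ler_sum => F _.
have hP := P_ge0 F; set P := kap F * wt mu F.
have -> : P * (dx x F == 0%N)%:R + P * (dx x F)%:R / 2 + P * (dx x F == 1%N)%:R / 2
   = P * ((dx x F == 0%N)%:R + (dx x F)%:R / 2 + (dx x F == 1%N)%:R / 2) by ring.
rewrite -[X in X <= _]mulr1; apply: ler_wpM2l => //.
case: (dx x F) => [|[|d]] /=.
- by rewrite !mul0r !addr0.
- by rewrite add0r -mulrDl -natrD divff // pnatr_eq0.
- rewrite mul0r addr0 add0r ler_pdivlMr ?ltr0n // mul1r ler_nat.
  by [].
Qed.

Lemma cyc_dx_ne1 F : is_cycle_edges m F -> dx x F != 1%N.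
Proof.
move=> /existsP [c /andP [/injectiveP ci /eqP ->]].
apply/eqP => h; have := cyc_dx hm ci x; rewrite -/(cedge c) h.
by move=> /(_ isT).
Qed.

Lemma step4 : \sum_F kap F * wt mu F * (dx x F == 1%N)%:R <= Tw mu m x set0.
Proof.
apply: (le_trans _ (@Epath_le R V mu hmu m x)); rewrite [X in _ <= X]big_mkcond /=.
rewrite le_eqVlt; apply/orP; left; apply/eqP; apply: eq_bigr => F _.
case: eqP => hd; last by rewrite andbF mulr0.
rewrite andbT /kap.
case hc: (is_cycle_edges m F); first by move: (cyc_dx_ne1 F hc); rewrite hd.
by case: (is_path_edges m F); rewrite /= ?mulr0 ?add0r ?mul1r ?mulr1 ?mul0r.
Qed.

Lemma Sw0 : Sw mu set0 = 1.
Proof.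
rewrite /Sw -hsimp.2; apply: eq_bigl => e; case: (is_edge e) => //=.
by apply/forallP => u; rewrite in_set0 implybT.
Qed.

Lemma step5 : Tw mu m x set0 <= mubar mu x * ((1 - mubar mu x) / (m.-1)%:R) ^+ m.-1.
Proof.
have hx0 : x \notin (set0 : {set V}) by rewrite in_set0.
have := Tw_step hmu (m.-1) hx0; rewrite prednK; last by lia.
move=> h; apply: le_trans h _.
have hb : \sum_(w | (w \notin set0) && (w != x)) mu [set x; w] = mubar mu x.
  by rewrite /mubar; apply: eq_bigl => w; rewrite in_set0.
have hS : Sw mu (x |: set0) <= 1 - mubar mu x.
  have := Sw_split hmu hx0; rewrite hb Sw0; lra.
rewrite -hb mulr_suml; apply: ler_sum => w /andP [_ hwx].
have hmw : 0 <= mu [set x; w] by apply: hmu; rewrite /is_edge cards2 (eq_sym x w) hwx.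
apply: ler_wpM2l => //; apply: le_trans (Tw_bound hmu (m.-1) _) _.
  by rewrite in_setU1 in_set0 orbF.
apply: lerXn2r; rewrite ?inE.
- by apply: divr_ge0; [exact: Sw_ge0 | exact: ler0n].
- by apply: divr_ge0; [rewrite subr_ge0 hb; exact: b_le1 | exact: ler0n].
- by rewrite hb; apply: ler_wpM2r => //; rewrite invr_ge0 ler0n.
Qed.

Lemma O_pos (hV : (m <= #|V|)%N) : 0 < objective m mu.
Proof.
pose c : {ffun 'I_m -> V} := [ffun i => enum_val (widen_ord hV i)].
have ci : injective c.
  by move=> i j; rewrite !ffunE => /enum_val_inj /(congr1 val) /= h; apply/val_inj.
pose F0 := [set cedge c i | i : 'I_m].
have hm0 : 0 < m%:R :> R by rewrite ltr0n; lia.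
pose nu0 (e : {set V}) : R := if e \in F0 then (m%:R)^-1 else 0.
have hnu0 e : 0 <= nu0 e by rewrite /nu0; case: ifP => // _; rewrite invr_ge0 ltW.
have hF0 : #|F0| = m := cyc_card hm ci.
have hsim0 : in_simplex nu0.
  split => // ; rewrite (bigID (fun e => e \in F0)) /=.
  rewrite [X in _ + X]big1; last by move=> e /andP [_ /negbTE h]; rewrite /nu0 h.
  rewrite addr0 (eq_bigl (fun e => e \in F0)); last first.
    move=> e; apply/andP/idP => [[]//|he]; split => //.
    by move: he => /imsetP [i _ ->]; exact: (cedge_edge hm ci).
  rewrite (eq_bigr (fun _ => (m%:R)^-1)); last by move=> e he; rewrite /nu0 he.
  by rewrite sumr_const hF0 -[_ *+ m]mulr_natr mulVf // gt_eqF.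
apply: lt_le_trans (hopt _ hsim0); rewrite obj_kap (bigD1 F0) //=.
apply: ltr_pwDl; last first.
  apply: sumr_ge0 => F _; apply: mulr_ge0; first exact: kap_ge0.
  by apply: prodr_ge0 => e _.
have hc : is_cycle_edges m F0.
  by apply/existsP; exists c; rewrite eqxx andbT; apply/injectiveP.
apply: mulr_gt0.
  rewrite /kap hc mulr1.
  have h1 : 0 < (2 * m)%:R :> R by rewrite ltr0n; lia.
  have h2 := ler0n R (is_path_edges m F0).
  lra.
rewrite /wt (eq_bigr (fun _ => (m%:R)^-1)); last by move=> e he; rewrite /nu0 he.
by rewrite prodr_const exprn_gt0 // invr_gt0.
Qed.

Lemma final (hV : (m <= #|V|)%N) :
  let O := objective m mu in let b := mubar mu x in
  1 <= m%:R / 2 * b + (1 - b) ^+ m + (2 * O)^-1 * b * ((1 - b) / (m.-1)%:R) ^+ m.-1.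
Proof.
cbv zeta; set O := objective m mu; set b := mubar mu x.
have hO : 0 < O := O_pos hV.
have hb0 : 0 <= b := b_ge0.
have hb1 : b <= 1 := b_le1.
have hm3 : 3%:R <= m%:R :> R by rewrite ler_nat.
case: (ltP b 1) => hb; last first.
  have -> : b = 1 by apply/eqP; rewrite eq_le hb1 hb.
  rewrite subrr expr0n /= mul0r expr0n /=.
  have -> : (m == 0%N) = false by apply/eqP; lia.
  have -> : (m.-1 == 0%N) = false by apply/eqP; lia.
  rewrite mulr0 !addr0 mulr1; lra.
have h1 := step1 hb; have h2 := step2; have h3 := step3; have h4 := step4; have h5 := step5.
rewrite -/O -/b in h1 h2 h3 h5.
set q := ((1 - b) / (m.-1)%:R) ^+ m.-1 in h5 *.
set A := \sum_F _ * _ * (dx x F == 0%N)%:R in h1 h3.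
set D := \sum_F _ * _ * (dx x F)%:R in h2 h3.
set E := \sum_F _ * _ * (dx x F == 1%N)%:R in h3 h4.
set P := (1 - b) ^+ m in h1 *.
have e : O * ((2 * O)^-1 * b * q) = b * q / 2.
  by field; rewrite gt_eqF.
rewrite -(ler_pM2l hO) mulr1 (mulrDr O) (mulrDr O) e.
have : m%:R * b * O = O * (m%:R / 2 * b) * 2 by field.
have : P * O = O * P by rewrite mulrC.
lra.
Qed.
End Main.

Theorem lemma4p5 (R : realType) (V : finType) (m : nat)
  (hm : (3 <= m)%N) (hV : (m <= #|V|)%N) (mu : {set V} -> R) :
  in_simplex mu ->
  (forall nu : {set V} -> R, in_simplex nu -> objective m nu <= objective m mu) ->
  forall x : V,
    let O := objective m mu in
    let b := mubar mu x in
    1 <= m%:R / 2 * b + (1 - b) ^+ m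
         + (2 * O)^-1 * b * ((1 - b) / (m.-1)%:R) ^+ m.-1.
Proof.
move=> hs ho x; exact: (@final R V m hm mu x hs ho hV).
Qed.
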